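(* Let $d\ge2$ and let $\mathcal{F}\subseteq\binom{\mathbb{N}}{d}$ be a finite family which is both left-compressed and right-compressed. Then $\mathcal{F}$ is shifted.
   Context: $\mathbb{N}=\{1,2,3,\dots\}$, $\mathbb{N}_{>k}=\{k+1,k+2,\dots\}$. $\binom{S}{d}$ is the set of $d$-element subsets of $S$; elements are written $\mathbf{u}=(u_1,\ldots,u_d)$ with $u_1<\cdots<u_d$. The squashed order: $\mathbf{u}<\mathbf{v}$ iff the largest element of the symmetric difference of $\mathbf{u},\mathbf{v}$ belongs to $\mathbf{v}$. A finite family in $\binom{\mathbb{N}}{e}$ (resp. $\binom{\mathbb{N}_{>k}}{e}$) is compressed in it if it consists of the smallest elements of $\binom{\mathbb{N}}{e}$ (resp. $\binom{\mathbb{N}_{>k}}{e}$) in the squashed order. For $\mathcal{F}\subseteq\binom{\mathbb{N}}{d}$ and $k\ge1$: $\widehat{\mathcal{F}}_{1,k}=\{\widehat{\mathbf{u}}\in\binom{\mathbb{N}}{d-1}\mid \{k\}\cup\widehat{\mathbf{u}}\in\mathcal{F},\ \min\widehat{\mathbf{u}}>k\}\subseteq\binom{\mathbb{N}_{>k}}{d-1}$ and $\widehat{\mathcal{F}}_{d,k}=\{\widehat{\mathbf{u}}\in\binom{\mathbb{N}}{d-1}\mid \widehat{\mathbf{u}}\cup\{k\}\in\mathcal{F},\ \max\widehat{\mathbf{u}}<k\}$. $\mathcal{F}$ is left-compressed if $\widehat{\mathcal{F}}_{1,k}$ is compressed in $\binom{\mathbb{N}_{>k}}{d-1}$ for every $k\ge1$,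 and right-compressed if $\widehat{\mathcal{F}}_{d,k}$ is compressed in $\binom{\mathbb{N}}{d-1}$ for every $k\ge1$. The Borel order: $\mathbf{v}\le_B\mathbf{u}$ iff $v_i\le u_i$ for all $i$; $\mathcal{F}$ is shifted if $\mathbf{v}\in\mathcal{F}$ whenever $\mathbf{v}\le_B\mathbf{u}$ for some $\mathbf{u}\in\mathcal{F}$. *)

(* Defs.v *)
From mathcomp Require Import all_boot.
Set Implicit Arguments. Unset Strict Implicit. Unset Printing Implicit Defensive.

(* A finite subset of N (or N_{>k}) is represented by its strictly increasing
   list of elements u = [:: u_1; ...; u_e] with u_1 < ... < u_e. *)

Definition dset (k e : nat) (u : seq nat) : bool :=
  [&& sorted ltn u, size u == e & all (fun x => k < x) u].

Definition sq_lt (u v : seq nat) : Prop :=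
  exists m, [/\ m \in v, m \notin u & forall x, m < x -> (x \in u) = (x \in v)].

(* G (a family given as a predicate) is compressed in binom(N_{>k}, e):
   it is a family in binom(N_{>k}, e) consisting of the smallest elements
   in squashed order, i.e. it is downward closed in squashed order. *)
Definition compressed_in (k e : nat) (G : seq nat -> bool) : Prop :=
  (forall v, G v -> dset k e v) /\
  (forall u v, G v -> dset k e u -> sq_lt u v -> G u).

Definition left_slice (d : nat) (F : seq (seq nat)) (k : nat) (u : seq nat) : bool :=
  [&& dset 0 d.-1 u, all (fun x => k < x) u & (k :: u) \in F].

Definition right_slice (d : nat) (F : seq (seq nat)) (k : nat) (u : seq nat) : bool :=
  [&& dset 0 d.-1 u, all (fun x => x < k) u & rcons u k \in F].

Definition left_compressed (d : nat) (F : seq (seq nat)) : Prop :=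
  forall k, 1 <= k -> compressed_in k d.-1 (left_slice d F k).

Definition right_compressed (d : nat) (F : seq (seq nat)) : Prop :=
  forall k, 1 <= k -> compressed_in 0 d.-1 (right_slice d F k).

Definition borel_le (v u : seq nat) : bool := all2 leq v u.

Definition shifted (d : nat) (F : seq (seq nat)) : Prop :=
  forall u v, u \in F -> dset 0 d v -> borel_le v u -> v \in F.

(* Main.v *)
Require Import Defs.
From mathcomp Require Import all_boot.

Lemma sorted_split {a c : seq nat} {y} :
  sorted ltn (a ++ y :: c) ->
  (forall z, z \in a -> z < y) /\ (forall z, z \in c -> y < z).
Proof.
rewrite (sorted_pairwise ltn_trans) pairwise_cat pairwise_cons allrel_consr.
case/and3P=> /andP[/allP Ha _] _ /andP[/allP Hc _]; split=> z hz.
- exact: (Ha z hz).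
- exact: (Hc z hz).
Qed.

Lemma sq_lt_swap {a c : seq nat} {x y} :
  x < y -> sorted ltn (a ++ x :: c) -> sorted ltn (a ++ y :: c) ->
  sq_lt (a ++ x :: c) (a ++ y :: c).
Proof.
move=> xy s1 s2; have [Ha Hc] := sorted_split s2.
have [Ha1 _] := sorted_split s1.
exists y; split.
- by rewrite mem_cat in_cons eqxx orbT.
- rewrite mem_cat in_cons negb_or; apply/andP; split.
    by apply/negP=> /Ha; rewrite ltnn.
  rewrite negb_or; apply/andP; split; first by rewrite eq_sym neq_ltn xy.
  by apply/negP=> /Hc; rewrite ltnn.
- move=> z yz; rewrite !mem_cat !in_cons.
  have -> : (z \in a) = false by apply/negP=> /Ha; rewrite ltnNge ltnW.
  have -> : (z == x) = false by apply/negP=> /eqP zx; move: yz; rewrite zx ltnNge ltnW.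
  have -> : (z == y) = false by apply/negP=> /eqP zx; move: yz; rewrite zx ltnn.
  by [].
Qed.

Section Main.
Variables (d : nat) (F : seq (seq nat)).
Hypotheses (d2 : 2 <= d) (hF : forall u, u \in F -> dset 0 d u)
  (hL : left_compressed d F) (hR : right_compressed d F).

Lemma step {a x y c} : x < y -> (a ++ y :: c) \in F -> dset 0 d (a ++ x :: c) ->
  (a ++ x :: c) \in F.
Proof.
move=> xy inF dx; have dy := hF _ inF.
move: (dx) (dy) => /and3P[sx /eqP szx px] /and3P[sy /eqP szy py].
case: c / lastP inF dx dy sx sy szx szy px py => [|b k] inF dx dy sx sy szx szy px py.
- (* last position: left compression *)
  case: a inF dx dy sx sy szx szy px py => [|k a] inF dx dy sx sy szx szy px py.
    by move: szx d2 => /= <-.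
  have k1 : 1 <= k by move: px => /= /andP[].
  have [_ Hdown] := hL k k1.
  have Lv : left_slice d F k (a ++ [:: y]).
    move: sy => /=; rewrite (path_sortedE ltn_trans) => /andP[allk sy].
    rewrite /left_slice inF allk andbT /dset sy /=.
    move: szy => /= <-; rewrite eqxx /=.
    by move: py => /= /andP[_ ->].
  move: sx => /=; rewrite (path_sortedE ltn_trans) => /andP[allk sx].
  have du : dset k d.-1 (a ++ [:: x]).
    by rewrite /dset sx allk; move: szx => /= <-; rewrite eqxx.
  have sy' : sorted ltn (a ++ [:: y]) by move: sy => /= /path_sorted.
  by case/and3P: (Hdown _ _ Lv du (sq_lt_swap xy sx sy')).
-
  have E1 : a ++ x :: rcons b k = rcons (a ++ x :: b) k by rewrite rcons_cat.
  have E2 : a ++ y :: rcons b k = rcons (a ++ y :: b) k by rewrite rcons_cat.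
  rewrite E1 E2 in inF dx dy sx sy szx szy px py *.
  have k1 : 1 <= k.
    by move: py; rewrite all_rcons => /andP[].
  have [_ Hdown] := hR k k1.
  have sy2 : sorted ltn ((a ++ y :: b) ++ [:: k]) by rewrite cats1.
  have sx2 : sorted ltn ((a ++ x :: b) ++ [:: k]) by rewrite cats1.
  have [Hy _] := sorted_split sy2.
  have [Hx _] := sorted_split sx2.
  have sy1 := (cat_sorted2 sy2).1.
  have sx1 := (cat_sorted2 sx2).1.
  have Lv : right_slice d F k (a ++ y :: b).
    rewrite /right_slice inF andbT /dset sy1 /=.
    move: szy; rewrite size_rcons => <-; rewrite eqxx /=.
    move: py; rewrite all_rcons => /andP[_ ->] /=.
    by apply/allP=> z /Hy.
  have du : dset 0 d.-1 (a ++ x :: b).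
    rewrite /dset sx1; move: szx; rewrite size_rcons => <-; rewrite eqxx /=.
    by move: px; rewrite all_rcons => /andP[_ ->].
  by case/and3P: (Hdown _ _ Lv du (sq_lt_swap xy sx1 sy1)).
Qed.

Lemma sorted_mix {a x s' y t'} : x <= y -> sorted ltn (a ++ x :: s') ->
  sorted ltn (a ++ y :: t') -> sorted ltn (a ++ x :: t').
Proof.
move=> xy; rewrite !sorted_cat_cons => /andP[ra _] /andP[_ py]; rewrite ra /=.
case: t' py => //= z t'' /andP[yz ->]; rewrite andbT.
exact: leq_ltn_trans xy yz.
Qed.

Lemma borel s : forall a t, all2 leq s t -> (a ++ t) \in F ->
  dset 0 d (a ++ s) -> (a ++ s) \in F.
Proof.
elim: s => [|x s IH] a [|y t] //= st inF ds.
move: st => /andP[xy st].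
have dt := hF _ inF.
move: (ds) (dt) => /and3P[ss /eqP szs ps] /and3P[stt /eqP szt pt].
have dm : dset 0 d (a ++ x :: t).
  rewrite /dset (sorted_mix xy ss stt) /=.
  move: szt; rewrite !size_cat /= => ->; rewrite eqxx /=.
  move: ps pt; rewrite !all_cat /= => /andP[-> /andP[-> _]] /andP[_ /andP[_ ->]].
  by [].
have inM : (a ++ x :: t) \in F.
  have [lt|eq] : x < y \/ x = y.
    by move: xy; rewrite leq_eqVlt => /orP[/eqP ->|->]; [right|left].
  - exact: step lt inF dm.
  - by rewrite eq.
rewrite -cat_rcons.
by apply: (IH (rcons a x) t st); rewrite cat_rcons.
Qed.
End Main.

Theorem lemma3p9 (d : nat) (F : seq (seq nat)) :
  2 <= d ->
  (forall u, u \in F -> dset 0 d u) ->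
  left_compressed d F ->
  right_compressed d F ->
  shifted d F.
Proof.
move=> d2 hF hL hR u v inF dv le.
exact: (@borel d F d2 hF hL hR v [::] u le inF dv).
Qed.
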